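(* Let $T$ be the BFS tree produced by temporal BFS on a temporal graph $G=(V,E)$ from source $s$ with starting time $t_s$. For every vertex $v\in V$, any two distinct occurrences of $v$ in $T$ have distinct levels.
   Context: A temporal graph is a pair $G=(V,E)$ where $V$ is a finite set of vertices and $E$ is a finite set of temporal edges, i.e. triples $(u,v,t)$ with $u,v\in V$, $u\neq v$, $t\in\mathbb{R}$ (the time at which the edge is active); distinct elements of $E$ are distinct triples. Fix $t_s\in\mathbb{R}$ and $s\in V$. Temporal BFS. Records are tuples $(x,d,\tau,p)$ (vertex $x$, level $d$, time $\tau$, predecessor record $p$ or none); every record ever created is an occurrence (node) of the BFS tree $T$, rooted at the initial record, with a tree edge from the predecessor record to the record; the level and time of an occurrence are the final values of its fields. For each $x\in V$ a current value $\sigma(x)$ is kept, initially $\infty$, and set to $\tau$ whenever a record of $x$ is created or its time is updated to $\tau$. Initially the FIFO queue $Q$ contains only $(s,0,t_s,\text{none})$ and $\sigma(s)=t_s$; no edge is traversed. While $Q\neq\emptyset$: pop the front record $R=(u,d_u,\sigma_u,p_u)$; let $B$ be the set of edges $(u,v,t)\in E$ not yet traversed with $\sigma_u\le t$; for each vertex $v$ such that $B$ contains an edge to $v$ (in any order), let $e=(u,v,t)$ be the edge of $B$ to $v$ with smallest $t$, mark $e$ traversed, and: (i) if $Q$ contains no record of $v$ and $\sigma(v)>t$, create $(v,d_u+1,t,R)$ and append it to $Q$; (ii) if $Q$ contains a record of $v$ with level $d_u+1$ and $\sigma(v)>t$, set that record's time to $t$ and predecessor to $R$; (iii) if $Q$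 contains a record of $v$ but none with level $d_u+1$, and $\sigma(v)>t$, create $(v,d_u+1,t,R)$ and append it to $Q$. *)

(* Defs.v *)
From Stdlib Require Import Reals List.
Import ListNotations.
Set Implicit Arguments.

Section TBFS.
Variable V : Type.

Record tedge := TEdge { esrc : V; edst : V; etime : R }.

Definition temporal_graph (E : list tedge) : Prop :=
  NoDup E /\ forall e, In e E -> esrc e <> edst e.

(* A record (x, d, tau, p); the predecessor is the index (position in the
   list of all records ever created) of the predecessor record. *)
Record trec := TRec { rv : V; rlev : nat; rtime : R; rpred : option nat }.

(* State of the algorithm:
   - recs  : all records ever created (the occurrences = nodes of T), by index;
   - queue : the FIFO queue Q, as a list of record indices (front first);
   - sigma : current values, None = infinity;
   - trav  : set of traversed edges;
   - cur   : None between pops; Some (k, B) while processing the popped record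
             of index k, where B is the set of edges of the initial B whose
             target has not yet been processed. *)
Record bstate := BState {
  recs  : list trec;
  queue : list nat;
  sigma : V -> option R;
  trav  : tedge -> Prop;
  cur   : option (nat * (tedge -> Prop)) }.

Definition sigma_gt (o : option R) (t : R) : Prop :=
  match o with None => True | Some x => (t < x)%R end.

Definition sigma_set (sg sg' : V -> option R) (v : V) (t : R) : Prop :=
  sg' v = Some t /\ forall x, x <> v -> sg' x = sg x.

Fixpoint set_nth (l : list trec) (j : nat) (r : trec) : list trec :=
  match l, j with
  | [], _ => []
  | _ :: l', 0 => r :: l'
  | a :: l', S j' => a :: set_nth l' j' r
  end.

Definition q_has (recs : list trec) (q : list nat) (v : V) : Prop :=
  exists j rj, In j q /\ nth_error recs j = Some rj /\ rv rj = v.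

Definition q_has_lev (recs : list trec) (q : list nat) (v : V) (d : nat) : Prop :=
  exists j rj, In j q /\ nth_error recs j = Some rj /\ rv rj = v /\ rlev rj = d.

Definition min_edge (B : tedge -> Prop) (e : tedge) : Prop :=
  B e /\ forall e', B e' -> edst e' = edst e -> (etime e <= etime e')%R.

Definition mark (tr : tedge -> Prop) (e : tedge) : tedge -> Prop :=
  fun x => tr x \/ x = e.

Definition drop_target (B : tedge -> Prop) (v : V) : tedge -> Prop :=
  fun x => B x /\ edst x <> v.

(* One step of temporal BFS (the inner "for each v" loop is executed one
   vertex at a time, in any order). *)
Inductive step (E : list tedge) : bstate -> bstate -> Prop :=
| st_pop : forall rs k q sg tr r,
    nth_error rs k = Some r ->
    step E (BState rs (k :: q) sg tr None)
      (BState rs q sg tr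
         (Some (k, fun e => In e E /\ esrc e = rv r /\ ~ tr e
                            /\ (rtime r <= etime e)%R)))
| st_done : forall rs q sg tr k B,
    (forall e, ~ B e) ->
    step E (BState rs q sg tr (Some (k, B))) (BState rs q sg tr None)
| st_create_i : forall rs q sg sg' tr k B r e,
    nth_error rs k = Some r -> min_edge B e ->
    ~ q_has rs q (edst e) ->
    sigma_gt (sg (edst e)) (etime e) ->
    sigma_set sg sg' (edst e) (etime e) ->
    step E (BState rs q sg tr (Some (k, B)))
      (BState (rs ++ [TRec (edst e) (S (rlev r)) (etime e) (Some k)])
              (q ++ [length rs]) sg' (mark tr e)
              (Some (k, drop_target B (edst e))))
| st_update_ii : forall rs q sg sg' tr k B r e j rj,
    nth_error rs k = Some r -> min_edge B e ->
    In j q -> nth_error rs j = Some rj -> rv rj = edst e ->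
    rlev rj = S (rlev r) ->
    sigma_gt (sg (edst e)) (etime e) ->
    sigma_set sg sg' (edst e) (etime e) ->
    step E (BState rs q sg tr (Some (k, B)))
      (BState (set_nth rs j (TRec (rv rj) (rlev rj) (etime e) (Some k)))
              q sg' (mark tr e)
              (Some (k, drop_target B (edst e))))
| st_create_iii : forall rs q sg sg' tr k B r e,
    nth_error rs k = Some r -> min_edge B e ->
    q_has rs q (edst e) ->
    ~ q_has_lev rs q (edst e) (S (rlev r)) ->
    sigma_gt (sg (edst e)) (etime e) ->
    sigma_set sg sg' (edst e) (etime e) ->
    step E (BState rs q sg tr (Some (k, B)))
      (BState (rs ++ [TRec (edst e) (S (rlev r)) (etime e) (Some k)])
              (q ++ [length rs]) sg' (mark tr e)
              (Some (k, drop_target B (edst e))))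
| st_skip : forall rs q sg tr k B e,
    min_edge B e ->
    ~ sigma_gt (sg (edst e)) (etime e) ->
    step E (BState rs q sg tr (Some (k, B)))
      (BState rs q sg (mark tr e) (Some (k, drop_target B (edst e)))).

Inductive reach (E : list tedge) : bstate -> bstate -> Prop :=
| reach_refl : forall st, reach E st st
| reach_step : forall st1 st2 st3, step E st1 st2 -> reach E st2 st3 -> reach E st1 st3.

Definition is_init (s : V) (ts : R) (st : bstate) : Prop :=
  recs st = [TRec s 0 ts None] /\ queue st = [0] /\
  sigma st s = Some ts /\ (forall x, x <> s -> sigma st x = None) /\
  (forall e, ~ trav st e) /\ cur st = None.

Definition is_final (st : bstate) : Prop := queue st = [] /\ cur st = None.

End TBFS.

(* Main.v *)
Require Import Defs.
From Stdlib Require Import Reals List Lia.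
Import ListNotations.

Section Aux.
Variable V : Type.

Lemma set_nth_fwd (rs : list (trec V)) j r' rj i x :
  nth_error rs j = Some rj -> rv r' = rv rj -> rlev r' = rlev rj ->
  nth_error (set_nth rs j r') i = Some x ->
  exists y, nth_error rs i = Some y /\ rv y = rv x /\ rlev y = rlev x.
Proof.
  revert j i. induction rs as [|a rs IH]; intros j i Hj Hv Hl H.
  - destruct j; discriminate.
  - destruct j as [|j]; destruct i as [|i]; simpl in *.
    + inversion Hj; inversion H; subst. eauto.
    + eauto.
    + inversion H; subst; eauto.
    + eauto.
Qed.

Lemma set_nth_bwd (rs : list (trec V)) j r' rj i y :
  nth_error rs j = Some rj -> rv r' = rv rj -> rlev r' = rlev rj ->
  nth_error rs i = Some y ->
  exists x, nth_error (set_nth rs j r') i = Some x /\ rv y = rv x /\ rlev y = rlev x.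
Proof.
  revert j i. induction rs as [|a rs IH]; intros j i Hj Hv Hl H.
  - destruct j; discriminate.
  - destruct j as [|j]; destruct i as [|i]; simpl in *.
    + inversion Hj; inversion H; subst. eauto.
    + eauto.
    + inversion H; subst; eauto.
    + eauto.
Qed.

Lemma app_fwd (rs : list (trec V)) x i y :
  nth_error (rs ++ [x]) i = Some y ->
  nth_error rs i = Some y \/ (i = length rs /\ y = x).
Proof.
  intros H. destruct (Nat.lt_ge_cases i (length rs)).
  - left. rewrite nth_error_app1 in H; auto.
  - right. rewrite nth_error_app2 in H; auto.
    destruct (i - length rs) eqn:E; simpl in H.
    + inversion H; split; auto; lia.
    + destruct n; discriminate.
Qed.

Lemma app_bwd (rs : list (trec V)) x i y :
  nth_error rs i = Some y -> nth_error (rs ++ [x]) i = Some y.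
Proof.
  intros H. rewrite nth_error_app1; auto.
  apply nth_error_Some. congruence.
Qed.

Lemma app_new (rs : list (trec V)) x :
  nth_error (rs ++ [x]) (length rs) = Some x.
Proof. rewrite nth_error_app2; auto. rewrite Nat.sub_diag. reflexivity. Qed.

Definition Inv (st : bstate V) : Prop :=
  exists L q1 q2,
    queue st = q1 ++ q2 /\
    (forall j, In j q1 -> exists r, nth_error (recs st) j = Some r /\ rlev r = L) /\
    (forall j, In j q2 -> exists r, nth_error (recs st) j = Some r /\ rlev r = S L) /\
    (forall j r, nth_error (recs st) j = Some r -> ~ In j (queue st) -> rlev r <= L) /\
    (forall k B, cur st = Some (k, B) ->
       exists r, nth_error (recs st) k = Some r /\ rlev r = L) /\
    (forall i j ri rj, i <> j -> nth_error (recs st) i = Some ri ->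
       nth_error (recs st) j = Some rj -> rv ri = rv rj -> rlev ri <> rlev rj).

Lemma create_ok rs q sg sg' tr tr' k B B' r (v : V) t :
  Inv (BState rs q sg tr (Some (k, B))) ->
  nth_error rs k = Some r ->
  (forall i ri, In i q -> nth_error rs i = Some ri -> rv ri = v -> rlev ri <> S (rlev r)) ->
  Inv (BState (rs ++ [TRec v (S (rlev r)) t (Some k)]) (q ++ [length rs]) sg' tr'
         (Some (k, B'))).
Proof.
  intros [L [q1 [q2 [Hq [H1 [H2 [H3 [H4 H5]]]]]]]] Hk Hnew; simpl in *.
  destruct (H4 k B eq_refl) as [r0 [Hr0 HL]].
  rewrite Hk in Hr0; inversion Hr0; subst r0.
  exists L, q1, (q2 ++ [length rs]); simpl. repeat split.
  - rewrite Hq, app_assoc; auto.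
  - intros j Hj. destruct (H1 j Hj) as [x [Hx Hl]]. exists x; split; auto. apply app_bwd; auto.
  - intros j Hj. apply in_app_or in Hj. destruct Hj as [Hj|Hj].
    + destruct (H2 j Hj) as [x [Hx Hl]]. exists x; split; auto. apply app_bwd; auto.
    + destruct Hj as [Hj|[]]. subst j. eexists; split. apply app_new. simpl. congruence.
  - intros j x Hx Hn. apply app_fwd in Hx. destruct Hx as [Hx|[-> ->]].
    + apply (H3 j); auto. intro; apply Hn; apply in_or_app; auto.
    + exfalso; apply Hn; apply in_or_app; right; left; auto.
  - intros k0 B0 Heq; inversion Heq; subst. exists r; split; auto. apply app_bwd; auto.
  - intros i j ri rj Hij Hi Hj Hv.
    apply app_fwd in Hi; apply app_fwd in Hj.
    destruct Hi as [Hi|[-> ->]]; destruct Hj as [Hj|[-> ->]].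
    + eauto.
    + simpl in *. intro Hl.
      destruct (in_dec Nat.eq_dec i q) as [Hin|Hin].
      * eapply Hnew; eauto.
      * specialize (H3 i ri Hi Hin). lia.
    + simpl in *. intro Hl.
      destruct (in_dec Nat.eq_dec j q) as [Hin|Hin].
      * eapply (Hnew j rj); eauto.
      * specialize (H3 j rj Hj Hin). lia.
    + congruence.
Qed.

Lemma step_inv E st st' : step E st st' -> Inv st -> Inv st'.
Proof.
  intros Hs HI. destruct Hs.
  -
    destruct HI as [L [q1 [q2 [Hq [H1 [H2 [H3 [H4 H5]]]]]]]]; simpl in *.
    destruct q1 as [|a q1].
    + simpl in Hq. subst q2.
      destruct (H2 k (or_introl eq_refl)) as [x [Hx Hl]]. rewrite H in Hx; inversion Hx; subst x.
      exists (S L), q, []; simpl. rewrite app_nil_r. repeat split; auto.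
      * intros j Hj. apply H2. right; auto.
      * intros _ [].
      * intros j y Hy Hn. destruct (Nat.eq_dec j k) as [->|Hne].
        { rewrite H in Hy; inversion Hy; subst; lia. }
        assert (~ In j (k :: q)) by (intros [?|?]; [congruence|auto]).
        specialize (H3 j y Hy H0). lia.
      * intros k0 B Heq; inversion Heq; subst. eauto.
    + simpl in Hq. inversion Hq; subst a q.
      destruct (H1 k (or_introl eq_refl)) as [x [Hx Hl]]. rewrite H in Hx; inversion Hx; subst x.
      exists L, q1, q2; simpl. repeat split; auto.
      * intros j Hj. apply H1. right; auto.
      * intros j y Hy Hn. destruct (Nat.eq_dec j k) as [->|Hne].
        { rewrite H in Hy; inversion Hy; subst; lia. }
        apply (H3 j y Hy). intros [?|?]; [congruence|auto].
      * intros k0 B Heq; inversion Heq; subst. eauto.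
  - destruct HI as [L [q1 [q2 [Hq [H1 [H2 [H3 [H4 H5]]]]]]]]; simpl in *.
    exists L, q1, q2; simpl; repeat split; auto. intros; discriminate.
  - eapply create_ok; eauto.
    intros i ri Hi Hri Hv Hl. apply H1. exists i, ri; auto.
  -
    destruct HI as [L [q1 [q2 [Hq [H1' [H2' [G3 [G4 G5]]]]]]]]; simpl in *.
    set (r' := TRec (rv rj) (rlev rj) (etime e) (Some k)).
    assert (Ev : rv r' = rv rj) by reflexivity.
    assert (El : rlev r' = rlev rj) by reflexivity.
    exists L, q1, q2; simpl; repeat split; auto.
    + intros j0 Hj0. destruct (H1' j0 Hj0) as [y [Hy Hl]].
      destruct (set_nth_bwd rs j r' rj _ _ H2 Ev El Hy) as [x [Hx [_ Hl']]]. exists x; split; congruence.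
    + intros j0 Hj0. destruct (H2' j0 Hj0) as [y [Hy Hl]].
      destruct (set_nth_bwd rs j r' rj _ _ H2 Ev El Hy) as [x [Hx [_ Hl']]]. exists x; split; congruence.
    + intros j0 x Hx Hn. destruct (set_nth_fwd rs j r' rj _ _ H2 Ev El Hx) as [y [Hy [_ Hl]]].
      rewrite <- Hl. eauto using G3.
    + intros k0 B0 Heq; inversion Heq; subst k0.
      destruct (G4 k B eq_refl) as [y [Hy Hl]].
      destruct (set_nth_bwd rs j r' rj _ _ H2 Ev El Hy) as [x [Hx [_ Hl']]]. exists x; split; congruence.
    + intros i0 j0 ri rj0 Hij Hi Hj Hv.
      destruct (set_nth_fwd rs j r' rj _ _ H2 Ev El Hi) as [y1 [Hy1 [Hv1 Hl1]]].
      destruct (set_nth_fwd rs j r' rj _ _ H2 Ev El Hj) as [y2 [Hy2 [Hv2 Hl2]]].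
      rewrite <- Hl1, <- Hl2. apply (G5 i0 j0); auto. congruence.
  - eapply create_ok; eauto.
    intros i ri Hi Hri Hv Hl. apply H2. exists i, ri; auto.
  - destruct HI as [L [q1 [q2 [Hq [H1 [H2 [H3 [H4 H5]]]]]]]]; simpl in *.
    exists L, q1, q2; simpl; repeat split; auto.
    intros k0 B0 Heq; inversion Heq; subst. eauto.
Qed.

Lemma reach_inv E st st' : reach E st st' -> Inv st -> Inv st'.
Proof. induction 1; eauto using step_inv. Qed.

End Aux.

Theorem lemma10 (V : Type) (Vfin : exists l : list V, forall x : V, In x l)
  (E : list (tedge V)) (HE : temporal_graph E) (s : V) (ts : R)
  (st0 st : bstate V) :
  is_init s ts st0 -> reach E st0 st -> is_final st ->
  forall (i j : nat) (ri rj : trec V),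
    i <> j ->
    nth_error (recs st) i = Some ri ->
    nth_error (recs st) j = Some rj ->
    rv ri = rv rj ->
    rlev ri <> rlev rj.
Proof.
  intros Hi Hr _.
  assert (I0 : Inv V st0).
  { destruct Hi as [Hrs [Hq [_ [_ [_ Hc]]]]].
    exists 0, [0], []. rewrite Hrs, Hq, Hc. simpl. repeat split.
    - intros j [<-|[]]. eexists; split; [reflexivity|reflexivity].
    - intros _ [].
    - intros j r Hj Hn. destruct j; simpl in Hj.
      + exfalso; apply Hn; auto.
      + destruct j; discriminate.
    - intros; discriminate.
    - intros i j ri rj Hij Hi' Hj'. destruct i as [|[|i]]; destruct j as [|[|j]];
        simpl in *; try discriminate; congruence. }
  destruct (reach_inv V E st0 st Hr I0) as [L [q1 [q2 [_ [_ [_ [_ [_ H5]]]]]]]].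
  exact H5.
Qed.
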